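(* Suppose that, for a given $\lambda >0$, $f(\lambda)$ is $\rho$-accurate, i.e. $|f(\lambda)|\le \rho$, and define \[ C(\{ S_k^\lambda \} _{k = 0}^{N - 1} ) - \gamma = :a \in (-\rho,\rho). \] Then, for the corresponding tuple $\{\lambda, S_k^\lambda,P_k^\lambda,F_k^\lambda\} _{k = 0}^{N - 1}$, $\{S_k^\lambda,F_k^\lambda\} _{k = 0}^{N - 1}$ is an optimal solution of the covariance selection problem with $\gamma$ replaced with $\gamma+ a \in (\gamma- \rho,\gamma + \rho)$.
   Context: Consider the stochastic LTI system $x(k+1)=Ax(k)+Bu(k)+w(k)$ with $x(k)\in\mathbb R^n$, $u(k)\in\mathbb R^m$, $x(0)\sim\mathcal N(z,V)$, $w(k)\sim\mathcal N(0,W)$ mutually independent, and linear feedback $u(k)=F_kx(k)$, $k\in\{0,\dots,N-1\}$. With $S_k=\mathbb E([x(k);u(k)][x(k);u(k)]^T)$, the covariance selection problem is: minimize $J_p(\{S_k\})=\mathrm{Tr}\big(Q_f([A\ B]S_{N-1}[A\ B]^T+W)\big)+\sum_{k=0}^{N-1}\mathrm{Tr}(\mathrm{diag}(Q_k,R_k)S_k)$ over $\{S_k,F_k\}$ subject to $S_k=\Phi(F_k,S_{k-1})$ ($k=1,\dots,N-1$), $S_0=[I_n;F_0](V+zz^T)[I_n;F_0]^T$, and $C(\{S_k\})\le\gamma$, where $C(\{S_k\})=\mathrm{Tr}\big(\tilde Q_f([A\ B]S_{N-1}[A\ B]^T+W)\big)+\sum_{k=0}^{N-1}\mathrm{Tr}(\mathrm{diag}(\tilde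 Q_k,\tilde R_k)S_k)$ and $\Phi(F,S)=[I_n;F]([A\ B]S[A\ B]^T+W)[I_n;F]^T$. Assumptions: $Q_f,\tilde Q_f,Q_k,\tilde Q_k\succeq0$, $R_k+\lambda\tilde R_k\succ0$ for all $k$, $\lambda>0$; $V\succ0$, $W\succ0$; strict feasibility of the inequality constraint. For $\lambda\ge0$, $X_N^\lambda=Q_f+\lambda\tilde Q_f$, $X_k^\lambda=A^TX_{k+1}^\lambda A-A^TX_{k+1}^\lambda B(R_k+\lambda\tilde R_k+B^TX_{k+1}^\lambda B)^{-1}B^TX_{k+1}^\lambda A+Q_k+\lambda\tilde Q_k$, $F_k^\lambda=-(R_k+\lambda\tilde R_k+B^TX_{k+1}^\lambda B)^{-1}B^TX_{k+1}^\lambda A$, $S_0^\lambda=[I;F_0^\lambda](V+zz^T)[I;F_0^\lambda]^T$, $S_k^\lambda=\Phi(F_k^\lambda,S_{k-1}^\lambda)$, $P_k^\lambda=\begin{bmatrix}Q_k+\lambda\tilde Q_k+A^TX_{k+1}^\lambda A & A^TX_{k+1}^\lambda B\\ B^TX_{k+1}^\lambda A & R_k+\lambda\tilde R_k+B^TX_{k+1}^\lambda B\end{bmatrix}$, and $f(\lambda)=C(\{S_k^\lambda\}_{k=0}^{N-1})-\gamma$. It was shown that for any $\lambda>0$ with $C(\{S_k^\lambda\})$ equal to the constraint level, $\{(S_k^\lambda,F_k^\lambda)\}$ is optimal for the problem with that constraint level. The setting is that $\lambda$ is obtained approximately by a bisection search on $f$, so $f(\lambda)=0$ holds only up to finite precision.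 *)

(* Defs.v *)
From HB Require Import structures.
From mathcomp Require Import all_boot all_order all_algebra.
Set Implicit Arguments. Unset Strict Implicit. Unset Printing Implicit Defensive.
Import Order.TTheory GRing.Theory Num.Theory.
Local Open Scope ring_scope.

Section CovSel.
Variables (R : realFieldType) (n m : nat).
Variables (A : 'M[R]_n) (B : 'M[R]_(n, m)) (W : 'M[R]_n).

Definition psd p (M : 'M[R]_p) : Prop :=
  M^T = M /\ forall x : 'cV[R]_p, 0 <= (x^T *m M *m x) 0 0.
Definition pd p (M : 'M[R]_p) : Prop :=
  M^T = M /\ forall x : 'cV[R]_p, x != 0 -> 0 < (x^T *m M *m x) 0 0.

Definition AB : 'M[R]_(n, n + m) := row_mx A B.
Definition IF (F : 'M[R]_(m, n)) : 'M[R]_(n + m, n) := col_mx 1%:M F.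

Definition Phi (F : 'M[R]_(m, n)) (S : 'M[R]_(n + m)) : 'M[R]_(n + m) :=
  IF F *m (AB *m S *m AB^T + W) *m (IF F)^T.

Definition quad_cost (N : nat) (Qf : 'M[R]_n) (Q : nat -> 'M[R]_n)
    (Rc : nat -> 'M[R]_m) (S : nat -> 'M[R]_(n + m)) : R :=
  \tr (Qf *m (AB *m S N.-1 *m AB^T + W)) +
  \sum_(k < N) \tr (block_mx (Q k) 0 0 (Rc k) *m S k).

(* initial second moment [I;F0](V + z z^T)[I;F0]^T *)
Definition S_init (V : 'M[R]_n) (z : 'cV[R]_n) (F0 : 'M[R]_(m, n)) :
    'M[R]_(n + m) :=
  IF F0 *m (V + z *m z^T) *m (IF F0)^T.

Definition dyn_constraints (N : nat) (V : 'M[R]_n) (z : 'cV[R]_n)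
    (S : nat -> 'M[R]_(n + m)) (F : nat -> 'M[R]_(m, n)) : Prop :=
  S 0%N = S_init V z (F 0%N) /\
  forall k : nat, (1 <= k < N)%N -> S k = Phi (F k) (S k.-1).

Definition feasible (N : nat) (V : 'M[R]_n) (z : 'cV[R]_n)
    (Qft : 'M[R]_n) (Qt : nat -> 'M[R]_n) (Rt : nat -> 'M[R]_m) (gam : R)
    (S : nat -> 'M[R]_(n + m)) (F : nat -> 'M[R]_(m, n)) : Prop :=
  dyn_constraints N V z S F /\ quad_cost N Qft Qt Rt S <= gam.

Definition optimal (N : nat) (V : 'M[R]_n) (z : 'cV[R]_n)
    (Qf : 'M[R]_n) (Q : nat -> 'M[R]_n) (Rc : nat -> 'M[R]_m)
    (Qft : 'M[R]_n) (Qt : nat -> 'M[R]_n) (Rt : nat -> 'M[R]_m) (gam : R)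
    (S : nat -> 'M[R]_(n + m)) (F : nat -> 'M[R]_(m, n)) : Prop :=
  feasible N V z Qft Qt Rt gam S F /\
  forall S' F', feasible N V z Qft Qt Rt gam S' F' ->
    quad_cost N Qf Q Rc S <= quad_cost N Qf Q Rc S'.

Variables (N : nat) (Qf Qft : 'M[R]_n) (Q Qt : nat -> 'M[R]_n)
          (Rc Rt : nat -> 'M[R]_m) (lam : R).

Definition Qlam (k : nat) : 'M[R]_n := Q k + lam *: Qt k.
Definition Rlam (k : nat) : 'M[R]_m := Rc k + lam *: Rt k.

(* Riccati recursion, indexed backwards: Xrev j = X_{N-j}^lam *)
Fixpoint Xrev (j : nat) : 'M[R]_n :=
  match j with
  | 0 => Qf + lam *: Qft
  | j'.+1 =>
      let k := (N - j'.+1)%N in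
      let X := Xrev j' in
      A^T *m X *m A
      - A^T *m X *m B *m invmx (Rlam k + B^T *m X *m B) *m B^T *m X *m A
      + Qlam k
  end.

(* X_k^lam, meaningful for k <= N *)
Definition Xlam (k : nat) : 'M[R]_n := Xrev (N - k).

Definition Flam (k : nat) : 'M[R]_(m, n) :=
  - (invmx (Rlam k + B^T *m Xlam k.+1 *m B) *m B^T *m Xlam k.+1 *m A).

(* P_k^lam (part of the tuple; not needed for the optimality statement) *)
Definition Plam (k : nat) : 'M[R]_(n + m) :=
  block_mx (Qlam k + A^T *m Xlam k.+1 *m A) (A^T *m Xlam k.+1 *m B)
           (B^T *m Xlam k.+1 *m A) (Rlam k + B^T *m Xlam k.+1 *m B).

Fixpoint Slam (V : 'M[R]_n) (z : 'cV[R]_n) (k : nat) : 'M[R]_(n + m) :=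
  match k with
  | 0 => S_init V z (Flam 0)
  | k'.+1 => Phi (Flam k'.+1) (Slam V z k')
  end.

End CovSel.

(* Main.v *)
Require Import Defs.
Set Warnings "-all".
From HB Require Import structures.
From mathcomp Require Import all_boot all_order all_algebra.
From mathcomp Require Import ring lra zify.
Set Implicit Arguments. Unset Strict Implicit. Unset Printing Implicit Defensive.
Import Order.TTheory GRing.Theory Num.Theory.
Local Open Scope ring_scope.

Section Psd.
Variable R : realFieldType.

Lemma trD p q (a b : 'M[R]_(p,q)) : (a + b)^T = a^T + b^T.
Proof. by apply/matrixP=> i j; rewrite !mxE. Qed.
Lemma trZ p q t (a : 'M[R]_(p,q)) : (t *: a)^T = t *: a^T.
Proof. by apply/matrixP=> i j; rewrite !mxE. Qed.
Lemma trN p q (a : 'M[R]_(p,q)) : (- a)^T = - a^T.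
Proof. by apply/matrixP=> i j; rewrite !mxE. Qed.
Lemma trB p q (a b : 'M[R]_(p,q)) : (a - b)^T = a^T - b^T.
Proof. by rewrite trD trN. Qed.

Definition bf p (M : 'M[R]_p) (u v : 'cV_p) : R := (u^T *m M *m v) 0 0.

Lemma bf_sym p (M : 'M[R]_p) u v : M^T = M -> bf M u v = bf M v u.
Proof.
move=> hM; rewrite /bf -[in RHS]hM.
have -> : (v^T *m M^T *m u) 0 0 = ((v^T *m M^T *m u)^T) 0 0 by rewrite [RHS]mxE.
by rewrite !trmx_mul !trmxK mulmxA.
Qed.

Lemma bf_expand p (M : 'M[R]_p) u v t :
  bf M (u + t *: v) (u + t *: v) =
  bf M u u + t * (bf M u v + bf M v u) + t ^+ 2 * bf M v v.
Proof.
rewrite /bf trD trZ !mulmxDl !mulmxDr -!scalemxAl -!scalemxAr.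
rewrite !mxE; ring.
Qed.

Lemma psd_CS p (M : 'M[R]_p) u v : psd M ->
  (bf M u v) ^+ 2 <= bf M u u * bf M v v.
Proof.
case=> hs hp.
have h t : 0 <= bf M u u + t * (2 * bf M u v) + t ^+ 2 * bf M v v.
  have := hp (u + t *: v); rewrite -/(bf _ _ _) bf_expand (bf_sym v u hs).
  by rewrite mulr2n mulrDl mul1r.
move: h; have c0 : 0 <= bf M v v by apply: hp.
have a0 : 0 <= bf M u u by apply: hp.
move: c0 a0.
set a := bf M u u; set b := bf M u v; set c := bf M v v => c0 a0 h.
have [cz|cpos] := eqVneq c 0.
  have [bz|bnz] := eqVneq b 0.
    by rewrite bz cz expr0n mulr0.
  have := h (- (a + 1) / (2 * b)); rewrite cz mulr0 addr0.
  have -> : - (a + 1) / (2 * b) * (2 * b) = - (a + 1).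
    by field.
  lra.
have cp : 0 < c by rewrite lt_def cpos c0.
have := mulr_ge0 c0 (h (- b / c)).
have -> : c * (a + - b / c * (2 * b) + (- b / c) ^+ 2 * c) = a * c - b ^+ 2.
  by field.
lra.
Qed.

Lemma bf_delta p (M : 'M[R]_p) i j : bf M (delta_mx i 0) (delta_mx j 0) = M i j.
Proof.
rewrite /bf trmx_delta -rowE -colE !mxE //.
Qed.

Lemma tr1 (M : 'M[R]_1) : \tr M = M 0 0.
Proof. by rewrite /mxtrace big_ord1. Qed.

Lemma mx11_mul (M N : 'M[R]_1) : (M *m N) 0 0 = M 0 0 * N 0 0.
Proof. by rewrite mxE big_ord1. Qed.


Lemma mxBZ p q (A B : 'M[R]_(p,q)) s i j : (A - s *: B) i j = A i j - s * B i j.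
Proof. by rewrite !mxE. Qed.

Lemma tr_psd_aux p (P Q : 'M[R]_p) k : psd P -> psd Q ->
  (forall i j : 'I_p, (i < p - k)%N -> Q i j = 0) -> 0 <= \tr (P *m Q).
Proof.
move=> hP; elim: k Q => [|k IH] Q hQ hz.
  have -> : Q = 0 by apply/matrixP => i j; rewrite mxE hz // subn0.
  by rewrite mulmx0 mxtrace0.
have [hk|hk] := leqP p k.
  apply: IH => // i j; rewrite (_ : (p - k = 0)%N) ?ltn0 //; lia.
have hi0 : (p - k.+1 < p)%N by lia.
pose i0 := Ordinal hi0.
have hsym i j : Q j i = Q i j.
  by rewrite -{1}hQ.1 mxE.
have hz' (i j : 'I_p) : (i < i0)%N -> Q i j = 0 by move=> h; apply: hz.
have hlt (i : 'I_p) : (i < p - k)%N -> (i < i0)%N \/ i = i0.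
  move=> h; rewrite /i0 /=; have [h1|h1] := ltnP i (p - k.+1); first by left.
  by right; apply/val_inj => /=; lia.
have q0 : 0 <= Q i0 i0 by rewrite -bf_delta; apply: hQ.2.
have [qz|qnz] := eqVneq (Q i0 i0) 0.
  have hrow j : Q i0 j = 0.
    have := psd_CS (delta_mx i0 0) (delta_mx j 0) hQ.
    rewrite !bf_delta qz mul0r => H.
    have : Q i0 j ^+ 2 = 0 by apply/le_anti; rewrite H sqr_ge0.
    by move/eqP; rewrite expf_eq0 /= => /eqP.
  apply: IH => // i j /hlt [h|->]; [exact: hz'|exact: hrow].
have qp : 0 < Q i0 i0 by rewrite lt_def qnz q0.
set q := Q i0 i0 in q0 qnz qp.
set c := col i0 Q; set r := row i0 Q.
have hrc : r^T = c by rewrite /r tr_row hQ.1.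
have hcr : c^T = r by rewrite -hrc trmxK.
set Q' := Q - q^-1 *: (c *m r).
have eQ : Q = Q' + q^-1 *: (c *m r) by rewrite /Q' subrK.
have hC i j : (c *m r) i j = Q i i0 * Q i0 j by rewrite mxE big_ord1 !mxE.
rewrite eQ mulmxDr mxtraceD -scalemxAr mxtraceZ.
apply: addr_ge0; last first.
  apply: mulr_ge0; first by rewrite invr_ge0.
  rewrite mulmxA mxtrace_mulC tr1 -hcr mulmxA; exact: hP.2.
apply: IH.
- split.
    by rewrite /Q' trB trZ trmx_mul hrc hcr hQ.1.
  move=> x; rewrite /Q' mulmxBr mulmxBl -scalemxAr -scalemxAl mxBZ.
  rewrite !mulmxA -[x^T *m c *m r *m x]mulmxA mx11_mul.
  have e1 : (x^T *m c) 0 0 = bf Q x (delta_mx i0 0) by rewrite /bf /c colE mulmxA.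
  have e2 : (r *m x) 0 0 = bf Q (delta_mx i0 0) x by rewrite /bf /r rowE trmx_delta.
  rewrite e1 e2 (bf_sym _ _ hQ.1) -expr2 -/(bf _ _ _).
  have := psd_CS (delta_mx i0 0) x hQ; rewrite bf_delta -/q => H.
  have : q^-1 * (bf Q (delta_mx i0 0) x ^+ 2) <= q^-1 * (q * bf Q x x).
    by rewrite ler_wpM2l // invr_ge0.
  rewrite mulKf // subr_ge0; apply.
- move=> i j /hlt [h|->]; rewrite /Q' mxBZ hC.
    by rewrite (hz' i j) // (hz' i i0) // mul0r mulr0 subr0.
  by rewrite mulrA mulVf // mul1r subrr.
Qed.

Lemma tr_psd p (P Q : 'M[R]_p) : psd P -> psd Q -> 0 <= \tr (P *m Q).
Proof. by move=> hP hQ; apply: (@tr_psd_aux p P Q p) => // i j; rewrite subnn. Qed.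


Lemma psd_congr p q (P : 'M[R]_p) (M : 'M[R]_(p, q)) : psd P -> psd (M^T *m P *m M).
Proof.
case=> hs hp; split; first by rewrite !trmx_mul trmxK hs mulmxA.
by move=> x; have := hp (M *m x); rewrite trmx_mul !mulmxA.
Qed.

Lemma psd_add p (P1 P2 : 'M[R]_p) : psd P1 -> psd P2 -> psd (P1 + P2).
Proof.
case=> h1 p1 [h2 p2]; split; first by rewrite trD h1 h2.
by move=> x; rewrite mulmxDr mulmxDl mxE addr_ge0.
Qed.

Lemma psd_scale p (P : 'M[R]_p) a : 0 <= a -> psd P -> psd (a *: P).
Proof.
move=> ha [h1 p1]; split; first by rewrite trZ h1.
by move=> x; rewrite -scalemxAr -scalemxAl mxE mulr_ge0.
Qed.

Lemma pd_psd p (P : 'M[R]_p) : pd P -> psd P.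
Proof.
case=> h1 p1; split => // x; have [->|xn] := eqVneq x 0.
  by rewrite mulmx0 mxE.
exact: ltW (p1 x xn).
Qed.

Lemma pd_add p (P1 P2 : 'M[R]_p) : pd P1 -> psd P2 -> pd (P1 + P2).
Proof.
case=> h1 p1 [h2 p2]; split; first by rewrite trD h1 h2.
by move=> x xn; rewrite mulmxDr mulmxDl mxE; have := p1 x xn; have := p2 x; lra.
Qed.

Lemma pd_unit p (P : 'M[R]_p) : pd P -> P \in unitmx.
Proof.
case=> hs hp; apply/negPn/negP => hu.
have hk : kermx P^T != 0 by rewrite kermx_eq0 row_free_unit unitmx_tr.
have [i hi] : exists i, row i (kermx P^T) != 0.
  apply/existsP; move: hk; apply: contraR; rewrite negb_exists => /forallP h.
  apply/eqP/row_matrixP => i; rewrite row0; exact/eqP/negPn/h.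
set v := row i (kermx P^T) in hi.
have hv : v *m P^T = 0 by rewrite /v -row_mul mulmx_ker row0.
have xn : v^T != 0 by rewrite trmx_eq0.
have := hp _ xn; rewrite trmxK -mulmxA.
have -> : P *m v^T = 0 by rewrite -[P]trmxK -trmx_mul hv trmx0.
by rewrite mulmx0 mxE ltxx.
Qed.

Lemma psd_block p q (P1 : 'M[R]_p) (P2 : 'M[R]_q) :
  psd P1 -> psd P2 -> psd (block_mx P1 0 0 P2).
Proof.
move=> h1 h2.
have -> : block_mx P1 0 0 P2 = (row_mx 1%:M 0)^T *m P1 *m row_mx 1%:M 0
   + (row_mx 0 1%:M)^T *m P2 *m row_mx 0 1%:M.
  rewrite !tr_row_mx !trmx1 !trmx0 !mul_col_mx.
  by rewrite !mul1mx !mul0mx !mul_mx_row !mulmx0 !mulmx1 add_col_mx addr0 add0r block_mxEv.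
by apply: psd_add; apply: psd_congr.
Qed.

End Psd.

Section Alg.
Variable R : realFieldType.

Lemma zmod_rearr (V : zmodType) (h b c d t : V) :
  h + b + c + d = h - t + (d + b + (c + t)).
Proof.
rewrite (addrC c t) (addrA (d + b)) (addrC (d + b)) -(addrA t) (addrA (h - t)) subrK.
by rewrite -!addrA; congr (_ + _); rewrite [RHS]addrC addrA.
Qed.

Lemma quad_id n m (H : 'M[R]_n) (K : 'M[R]_(m, n)) (G : 'M[R]_m) (F : 'M[R]_(m, n)) :
  G^T = G -> G \in unitmx ->
  (col_mx 1%:M F)^T *m block_mx H K^T K G *m col_mx 1%:M F =
  (H - K^T *m invmx G *m K) + (F + invmx G *m K)^T *m G *m (F + invmx G *m K).
Proof.
move=> hs hu.
have e1 p (X : 'M_(p, m)) : X *m G *m invmx G = X by rewrite -mulmxA mulmxV // mulmx1.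
have e2 p (X : 'M_(p, m)) : X *m invmx G *m G = X by rewrite -mulmxA mulVmx // mulmx1.
rewrite tr_col_mx trmx1 mul_row_block mul_row_col !mul1mx !mulmx1.
rewrite trD trmx_mul trmx_inv hs !mulmxDl !mulmxDr !mulmxA !e1 !e2.
by rewrite addrA (zmod_rearr _ _ _ _ (K^T *m invmx G *m K)).
Qed.

Lemma tr_congr p q (M : 'M[R]_p) (L : 'M[R]_(p, q)) (Sg : 'M[R]_q) :
  \tr (M *m (L *m Sg *m L^T)) = \tr (L^T *m M *m L *m Sg).
Proof. by rewrite !mulmxA mxtrace_mulC !mulmxA. Qed.

Lemma psd_congrT p q (P : 'M[R]_p) (M : 'M[R]_(q, p)) : psd P -> psd (M *m P *m M^T).
Proof. by move=> h; have := psd_congr M^T h; rewrite trmxK. Qed.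

Lemma psd1 : psd (1%:M : 'M[R]_1).
Proof.
split; first exact: trmx1.
by move=> x; rewrite mulmx1 mxE big_ord1 !mxE -expr2 sqr_ge0.
Qed.

Lemma psd_zz p (z : 'cV[R]_p) : psd (z *m z^T).
Proof. by have := psd_congrT z psd1; rewrite mulmx1. Qed.

End Alg.

Section LQ.
Variables (R : realFieldType) (n m : nat) (A : 'M[R]_n) (B : 'M[R]_(n, m))
  (W : 'M[R]_n) (N : nat) (Qf Qft : 'M[R]_n) (Q Qt : nat -> 'M[R]_n)
  (Rc Rt : nat -> 'M[R]_m) (lam : R).
Local Notation X k := (Xlam A B N Qf Qft Q Qt Rc Rt lam k).
Local Notation Fl k := (Flam A B N Qf Qft Q Qt Rc Rt lam k).
Local Notation Ql k := (Qlam Q Qt lam k).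
Local Notation Rl k := (Rlam Rc Rt lam k).
Local Notation ABm := (AB A B).

Definition Gm k := Rl k + B^T *m X k.+1 *m B.
Definition Km k := B^T *m X k.+1 *m A.
Definition Hm k := A^T *m X k.+1 *m A + Ql k.

Lemma Xform (X' : 'M[R]_n) (Qk : 'M[R]_n) (G : 'M[R]_m) : X'^T = X' ->
  A^T *m X' *m A - A^T *m X' *m B *m invmx G *m B^T *m X' *m A + Qk =
  (A^T *m X' *m A + Qk) - (B^T *m X' *m A)^T *m invmx G *m (B^T *m X' *m A).
Proof.
move=> hX; rewrite !trmx_mul trmxK hX !mulmxA.
by rewrite addrAC.
Qed.

Lemma P_eq (X' : 'M[R]_n) Qk Rk : X'^T = X' ->
  block_mx Qk 0 0 Rk + ABm^T *m X' *m ABm =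
  block_mx (A^T *m X' *m A + Qk) (B^T *m X' *m A)^T (B^T *m X' *m A) (Rk + B^T *m X' *m B).
Proof.
move=> hX; rewrite /AB tr_row_mx mul_col_mx mul_col_row add_block_mx !add0r.
by rewrite !trmx_mul trmxK hX !mulmxA [Qk + _]addrC.
Qed.

Hypotheses (hQl : forall k, psd (Ql k)) (hRl : forall k, pd (Rl k))
  (hXf : psd (Qf + lam *: Qft)).

Lemma Xrev_psd j : psd (Xrev A B N Qf Qft Q Qt Rc Rt lam j).
Proof.
elim: j => [|j IH] //=.
set X' := Xrev A B N Qf Qft Q Qt Rc Rt lam j in IH *.
set k := (N - j.+1)%N.
have hG : pd (Rl k + B^T *m X' *m B) by apply: pd_add; [exact: hRl|exact: psd_congr].
set G := Rl k + B^T *m X' *m B in hG *.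
rewrite Xform; last exact: IH.1.
set K := B^T *m X' *m A.
have -> : A^T *m X' *m A + Ql k - K^T *m invmx G *m K =
   (col_mx 1%:M (- (invmx G *m K)))^T *m block_mx (A^T *m X' *m A + Ql k) K^T K G
     *m col_mx 1%:M (- (invmx G *m K)).
  rewrite quad_id ?hG.1 ?pd_unit // addNr trmx0 mul0mx mulmx0 addr0 //.
rewrite /G -P_eq; last exact: IH.1.
apply: psd_congr; apply: psd_add; first by apply: psd_block; [exact: hQl|exact: pd_psd].
exact: psd_congr.
Qed.

Lemma Xlam_psd k : psd (X k).
Proof. exact: Xrev_psd. Qed.

Lemma Gm_pd k : pd (Gm k).
Proof. by apply: pd_add; [exact: hRl|apply: psd_congr; exact: Xlam_psd]. Qed.

Lemma Xlam_step k : (k < N)%N -> X k = Hm k - (Km k)^T *m invmx (Gm k) *m Km k.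
Proof.
move=> hk; rewrite /Xlam (_ : (N - k = (N - k.+1).+1)%N); last by lia.
rewrite /= (_ : (N - (N - k.+1).+1 = k)%N); last by lia.
rewrite Xform //; exact: (Xrev_psd _).1.
Qed.

Lemma Flam_eq k : Fl k = - (invmx (Gm k) *m Km k).
Proof. by rewrite /Flam /Gm /Km !mulmxA. Qed.

Lemma step_id k (F : 'M[R]_(m, n)) (Sg : 'M[R]_n) : (k < N)%N ->
  \tr (block_mx (Ql k) 0 0 (Rl k) *m (IF F *m Sg *m (IF F)^T)) +
  \tr (X k.+1 *m (ABm *m (IF F *m Sg *m (IF F)^T) *m ABm^T + W))
  = \tr (X k.+1 *m W) + \tr (X k *m Sg) +
    \tr ((F - Fl k)^T *m Gm k *m (F - Fl k) *m Sg).
Proof.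
move=> hk.
have hX : (X k.+1)^T = X k.+1 by exact: (Xlam_psd _).1.
rewrite mulmxDr mxtraceD (tr_congr (X k.+1) ABm) addrA -(mxtraceD (block_mx _ _ _ _ *m _)) -mulmxDl (P_eq _ _ hX).
rewrite tr_congr /IF quad_id; last 2 first.
- exact: (Gm_pd k).1.
- exact: pd_unit (Gm_pd k).
rewrite -/(Km k) -/(Gm k) (Xlam_step hk) Flam_eq opprK /Hm.
by rewrite [in LHS]mulmxDl [in LHS]mxtraceD [LHS]addrC addrA.
Qed.


Definition Sig (V : 'M[R]_n) (z : 'cV[R]_n) (S : nat -> 'M[R]_(n + m)) k : 'M[R]_n :=
  if k is k'.+1 then ABm *m S k' *m ABm^T + W else V + z *m z^T.

Lemma dyn_S V z S F : dyn_constraints A B W N V z S F ->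
  forall k, (k < N)%N -> S k = IF (F k) *m Sig V z S k *m (IF (F k))^T.
Proof.
case=> h0 hk [|k] hkN; first by rewrite h0.
by rewrite hk //= hkN.
Qed.

Lemma tele V z S F j : dyn_constraints A B W N V z S F -> (j <= N)%N ->
  \sum_(k < j) \tr (block_mx (Ql k) 0 0 (Rl k) *m S k) + \tr (X j *m Sig V z S j)
  = \tr (X 0 *m Sig V z S 0) + \sum_(k < j) \tr (X k.+1 *m W) +
    \sum_(k < j) \tr ((F k - Fl k)^T *m Gm k *m (F k - Fl k) *m Sig V z S k).
Proof.
move=> hd; elim: j => [|j IH] hj.
  by rewrite !big_ord0 add0r !addr0.
rewrite !big_ord_recr /=.
have hjN : (j < N)%N by [].
have e1 := IH (ltnW hj).
have e2 := step_id (F j) (Sig V z S j) hjN.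
rewrite -(dyn_S hd hjN) in e2.
move: e1 e2 => /= e1 e2.
set a1 := \sum_(i < j) _ in e1 *; set a2 := \sum_(i < j) _ in e1 *; set a3 := \sum_(i < j) _ in e1 *.
lra.
Qed.


Lemma Sig_psd V z S F : pd V -> pd W -> dyn_constraints A B W N V z S F ->
  forall k, (k < N)%N -> psd (Sig V z S k).
Proof.
move=> hV hW hd; elim=> [|k IH] hk /=.
  exact: psd_add (pd_psd hV) (psd_zz z).
apply: psd_add; last exact: pd_psd.
apply: psd_congrT; rewrite (dyn_S hd (ltnW hk)); apply: psd_congrT; exact: IH (ltnW hk).
Qed.

Lemma cost_w V z S F : dyn_constraints A B W N V z S F -> (0 < N)%N ->
  quad_cost A B W N (Qf + lam *: Qft) (Qlam Q Qt lam) (Rlam Rc Rt lam) S =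
  \tr (X 0 *m Sig V z S 0) + \sum_(k < N) \tr (X k.+1 *m W) +
    \sum_(k < N) \tr ((F k - Fl k)^T *m Gm k *m (F k - Fl k) *m Sig V z S k).
Proof.
move=> hd hN; rewrite -(tele hd (leqnn N)) /quad_cost.
have -> : X N = Qf + lam *: Qft by rewrite /Xlam subnn.
have -> : Sig V z S N = ABm *m S N.-1 *m ABm^T + W by rewrite -[in LHS](prednK hN).
by rewrite addrC.
Qed.

End LQ.

Lemma wlin (R : realFieldType) n m (A : 'M[R]_n) (B : 'M[R]_(n, m)) W N Qf Qft Q Qt Rc Rt lam S :
  quad_cost A B W N (Qf + lam *: Qft) (Qlam Q Qt lam) (Rlam Rc Rt lam) S =
  quad_cost A B W N Qf Q Rc S + lam * quad_cost A B W N Qft Qt Rt S.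
Proof.
rewrite /quad_cost /Qlam /Rlam mulmxDl -scalemxAl mxtraceD mxtraceZ.
have hb k : block_mx (Q k + lam *: Qt k) 0 0 (Rc k + lam *: Rt k) =
     block_mx (Q k) 0 0 (Rc k) + lam *: block_mx (Qt k) 0 0 (Rt k).
  by rewrite scale_block_mx add_block_mx !scaler0 !add0r.
rewrite (eq_bigr (fun k : 'I_N => \tr (block_mx (Q k) 0 0 (Rc k) *m S k) +
   lam * \tr (block_mx (Qt k) 0 0 (Rt k) *m S k))); last first.
  by move=> k _; rewrite hb mulmxDl -scalemxAl mxtraceD mxtraceZ.
rewrite big_split /= -mulr_sumr.
set a := \sum_(i < N) _; set b := \sum_(i < N) _.
ring.
Qed.

Unset Implicit Arguments.

Theorem proposition6 (R : realFieldType) (n m N : nat)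
    (A : 'M[R]_n) (B : 'M[R]_(n, m)) (W V : 'M[R]_n) (z : 'cV[R]_n)
    (Qf Qft : 'M[R]_n) (Q Qt : nat -> 'M[R]_n) (Rc Rt : nat -> 'M[R]_m)
    (gam rho lam : R) :
  (0 < N)%N ->
  psd Qf -> psd Qft -> (forall k, psd (Q k)) -> (forall k, psd (Qt k)) ->
  (forall l : R, 0 < l -> forall k, pd (Rc k + l *: Rt k)) ->
  pd V -> pd W ->
  (* strict feasibility of the inequality constraint *)
  (exists (S : nat -> 'M[R]_(n + m)) (F : nat -> 'M[R]_(m, n)),
      dyn_constraints A B W N V z S F /\ quad_cost A B W N Qft Qt Rt S < gam) ->
  0 < lam ->
  (* f(lam) is rho-accurate *)
  `| quad_cost A B W N Qft Qt Rt (Slam A B W N Qf Qft Q Qt Rc Rt lam V z) - gam |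
     <= rho ->
  let a := quad_cost A B W N Qft Qt Rt (Slam A B W N Qf Qft Q Qt Rc Rt lam V z)
           - gam in
  (gam - rho <= gam + a <= gam + rho) /\
  optimal A B W N V z Qf Q Rc Qft Qt Rt (gam + a)
    (Slam A B W N Qf Qft Q Qt Rc Rt lam V z)
    (Flam A B N Qf Qft Q Qt Rc Rt lam).
Proof.
move=> hN hQf hQft hQ hQt hRp hV hW _ hlam hrho a.
set Sl := Slam A B W N Qf Qft Q Qt Rc Rt lam V z in hrho a *.
have hl0 : 0 <= lam by exact: ltW.
have hQl k : psd (Qlam Q Qt lam k) by apply: psd_add; [exact: hQ|exact: psd_scale].
have hRl k : pd (Rlam Rc Rt lam k) by exact: hRp.
have hXf : psd (Qf + lam *: Qft) by apply: psd_add => //; exact: psd_scale.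
have hdl : dyn_constraints A B W N V z Sl (Flam A B N Qf Qft Q Qt Rc Rt lam).
  by split => // [[|k]] //.
have ea : gam + a = quad_cost A B W N Qft Qt Rt Sl by rewrite /a addrC subrK.
split.
  move: hrho; rewrite ler_norml -/a => /andP[h1 h2].
  by apply/andP; split; lra.
rewrite ea; split; first by split.
move=> S' F' [hd' hc'].
have e1 := cost_w hQl hRl hXf hd' hN.
have e2 := cost_w hQl hRl hXf hdl hN.
rewrite !wlin in e1 e2.
set E' := \sum_(k < N) \tr (_^T *m _ *m _ *m _) in e1.
have hE' : 0 <= E'.
  apply: sumr_ge0 => k _; apply: tr_psd.
    apply: psd_congr; apply: pd_psd; exact: Gm_pd hQl hRl hXf _.
  exact: Sig_psd hV hW hd' _ (ltn_ord k).
have hEl : \sum_(k < N) \tr ((Flam A B N Qf Qft Q Qt Rc Rt lam k - Flam A B N Qf Qft Q Qt Rc Rt lam k)^T *m Gm A B N Qf Qft Q Qt Rc Rt lam k *m (Flam A B N Qf Qft Q Qt Rc Rt lam k - Flam A B N Qf Qft Q Qt Rc Rt lam k) *m Sig A B W V z Sl k) = 0.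
  by apply: big1 => k _; rewrite subrr trmx0 !mul0mx mxtrace0.
rewrite hEl addr0 in e2.
have hS0 : Sig A B W V z S' 0 = Sig A B W V z Sl 0 by [].
rewrite hS0 in e1.
have hm : lam * quad_cost A B W N Qft Qt Rt S' <= lam * quad_cost A B W N Qft Qt Rt Sl.
  by rewrite ler_wpM2l.
move: e1 e2 hm; set c1 := \tr _; set c2 := \sum_(k < N) _.
lra.
Qed.
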